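(* For any two infinite cardinals $p\ge q$, the generalized Baer--Levi semigroup $B(p,q)$ is not DSC.
   Context: Let $X$ be a set of cardinality $p$. $B(p,q)=\{f\colon X\to X \mid f\text{ injective and } |X\setminus Xf|=q\}$ (where $Xf$ is the image of $f$), a semigroup under composition of functions. For a semigroup $T$, a diagonal subsemigroup of $T\times T$ is a subsemigroup containing $\{(t,t)\colon t\in T\}$; a congruence is a symmetric and transitive diagonal subsemigroup; $T$ is DSC if every diagonal subsemigroup of $T\times T$ is a congruence on $T$. *)

(* Defs.v *)
(* Cardinals are represented by types: |X| = p, |Q| = q. *)
From Stdlib Require Import List.

Definition infinite_type (T : Type) : Prop :=
  forall l : list T, exists x : T, ~ In x l.

Definition equipotent (A B : Type) : Prop :=
  exists (g : A -> B) (h : B -> A),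
    (forall a, h (g a) = a) /\ (forall b, g (h b) = b).

Definition injective_fun {A B : Type} (f : A -> B) : Prop :=
  forall x y, f x = f y -> x = y.

Definition coimage {X : Type} (f : X -> X) : Type :=
  { x : X | ~ exists y, f y = x }.

Definition inBL (X Q : Type) (f : X -> X) : Prop :=
  injective_fun f /\ equipotent (coimage f) Q.

(* Product in the semigroup: functions act on the right, so
   x (f g) = (x f) g, i.e. f g = g o f. *)
Definition bl_mul {X : Type} (f g : X -> X) : X -> X := fun x => g (f x).

Definition diagonal_subsemigroup {X : Type} (inB : (X -> X) -> Prop)
  (rho : (X -> X) -> (X -> X) -> Prop) : Prop :=
  (forall a b, rho a b -> inB a /\ inB b) /\
  (forall a, inB a -> rho a a) /\
  (forall a b c d, rho a b -> rho c d -> rho (bl_mul a c) (bl_mul b d)).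

Definition is_congruence {X : Type} (inB : (X -> X) -> Prop)
  (rho : (X -> X) -> (X -> X) -> Prop) : Prop :=
  diagonal_subsemigroup inB rho /\
  (forall a b, rho a b -> rho b a) /\
  (forall a b c, rho a b -> rho b c -> rho a c).

Definition DSC {X : Type} (inB : (X -> X) -> Prop) : Prop :=
  forall rho, diagonal_subsemigroup inB rho -> is_congruence inB rho.

(* Main.v *)
Require Import Defs.
From Stdlib Require Import List Arith Lia Classical ClassicalEpsilon ProofIrrelevance.
From mathcomp Require classical_sets.
Import ListNotations.

Lemma zorn_rel (T : Type) (P : (T -> Prop) -> Prop) :
  (forall F : (T -> Prop) -> Prop, (forall X, F X -> P X) ->
     (forall X Y, F X -> F Y -> (forall t, X t -> Y t) \/ (forall t, Y t -> X t)) ->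
     P (fun t => exists2 X, F X & X t)) ->
  exists A, P A /\ forall B, (forall t, A t -> B t) -> ~(forall t, B t -> A t) -> ~ P B.
Proof.
intros H.
destruct (@classical_sets.Zorn_bigcup T P) as [A [PA HA]].
- intros F FP tot. apply (H F FP tot).
- exists A; split; [exact PA|]. intros B h1 h2. apply (HA B). split; assumption.
Qed.

Definition dec (P : Prop) : {P} + {~P} := excluded_middle_informative P.

Section QQ.
Variable Q : Type.

Definition Good (A : Q * (Q * bool) -> Prop) : Prop :=
 (forall x p p', A (x,p) -> A (x,p') -> p = p') /\
 (forall x x' p, A (x,p) -> A (x',p) -> x = x') /\
 (forall x y b, A (x,(y,b)) -> exists p, A (y,p)) /\
 (forall y p b, A (y,p) -> exists x, A (x,(y,b))).

Lemma good_zorn : exists A, Good A /\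
  forall B, (forall t, A t -> B t) -> ~(forall t, B t -> A t) -> ~ Good B.
Proof.
apply zorn_rel. intros F FP tot.
assert (both : forall X Y t t', F X -> F Y -> X t -> Y t' ->
   exists Z, F Z /\ Z t /\ Z t').
{ intros X Y t t' FX FY Xt Yt'. destruct (tot X Y FX FY) as [h|h].
  - exists Y; auto.
  - exists X; auto. }
split; [|split; [|split]].
- intros x p p' [X FX Xp] [Y FY Yp].
  destruct (both _ _ _ _ FX FY Xp Yp) as [Z [FZ [Z1 Z2]]].
  destruct (FP Z FZ) as [g _]. eapply g; eauto.
- intros x x' p [X FX Xp] [Y FY Yp].
  destruct (both _ _ _ _ FX FY Xp Yp) as [Z [FZ [Z1 Z2]]].
  destruct (FP Z FZ) as [_ [g _]]. eapply g; eauto.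
- intros x y b [X FX Xp]. destruct (FP X FX) as [_ [_ [g _]]].
  destruct (g _ _ _ Xp) as [p Hp]. exists p; exists X; auto.
- intros y p b [X FX Xp]. destruct (FP X FX) as [_ [_ [_ g]]].
  destruct (g _ _ b Xp) as [x Hx]. exists x; exists X; auto.
Qed.

Variable A : Q * (Q * bool) -> Prop.
Hypothesis GA : Good A.
Hypothesis maxA : forall B, (forall t, A t -> B t) -> ~(forall t, B t -> A t) -> ~ Good B.

Definition Dm (x : Q) := exists p, A (x,p).

Section Seq.
Variable pick : list Q -> Q.
Hypothesis Hpick : forall l, ~ Dm (pick l) /\ ~ In (pick l) l.
Fixpoint pre (n : nat) : list Q := match n with 0 => nil | S n => pick (pre n) :: pre n end.
Definition sq n := pick (pre n).
Lemma sq_in : forall n m, m < n -> In (sq m) (pre n).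
Proof.
induction n; intros m Hm; [lia|]. simpl.
destruct (Nat.eq_dec m n) as [->|ne]; [left; reflexivity| right; apply IHn; lia].
Qed.
Lemma sq_inj : forall m n, sq m = sq n -> m = n.
Proof.
intros m n E. destruct (lt_eq_lt_dec m n) as [[h|h]|h]; auto.
- exfalso. apply (proj2 (Hpick (pre n))). fold (sq n). rewrite <- E. apply sq_in; auto.
- exfalso. apply (proj2 (Hpick (pre m))). fold (sq m). rewrite E. apply sq_in; auto.
Qed.

Definition ix (n : nat) (b : bool) := if b then 2*n+1 else 2*n.
Lemma ix_div2 n b : Nat.div2 (ix n b) = n.
Proof. destruct b; simpl ix; [apply Nat.div2_odd'|apply Nat.div2_double]. Qed.
Lemma ix_odd n b : Nat.odd (ix n b) = b.
Proof. destruct b; simpl ix; [apply Nat.odd_odd|apply Nat.odd_even]. Qed.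
Lemma div2_odd_inj n m : Nat.div2 n = Nat.div2 m -> Nat.odd n = Nat.odd m -> n = m.
Proof. intros h1 h2. rewrite (Nat.div2_odd n), (Nat.div2_odd m), h1, h2. reflexivity. Qed.

Definition Bx (t : Q * (Q * bool)) : Prop :=
  A t \/ exists n, t = (sq n, (sq (Nat.div2 n), Nat.odd n)).

Lemma Bx_good : Good Bx.
Proof.
destruct GA as [g1 [g2 [g3 g4]]].
assert (nd : forall n p, ~ A (sq n, p)).
{ intros n p h. apply (proj1 (Hpick (pre n))). exists p; exact h. }
split; [|split; [|split]].
- intros x p p' [h|[n h]] [h'|[n' h']].
  + eauto.
  + inversion h'; subst. exfalso; eapply nd; eauto.
  + inversion h; subst. exfalso; eapply nd; eauto.
  + injection h as hx hp. injection h' as hx' hp'. subst.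
    apply sq_inj in hx'. subst. reflexivity.
- intros x x' p [h|[n h]] [h'|[n' h']].
  + eauto.
  + inversion h'; subst. destruct (g3 _ _ _ h) as [q hq]. exfalso; eapply nd; eauto.
  + inversion h; subst. destruct (g3 _ _ _ h') as [q hq]. exfalso; eapply nd; eauto.
  + injection h as hx hp. subst. injection h' as hx' hy' hb'. subst.
    apply sq_inj in hy'. f_equal. apply div2_odd_inj; congruence.
- intros x y b [h|[n h]].
  + destruct (g3 _ _ _ h) as [p hp]. exists p; left; exact hp.
  + inversion h; subst. eexists. right. exists (Nat.div2 n). reflexivity.
- intros y p b [h|[n h]].
  + destruct (g4 _ _ b h) as [x hx]. exists x; left; exact hx.
  + inversion h; subst. exists (sq (ix n b)). right. exists (ix n b).
    rewrite ix_div2, ix_odd. reflexivity.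
Qed.

Lemma seq_contra : False.
Proof.
apply (maxA Bx).
- intros t h; left; exact h.
- intros h. apply (proj1 (Hpick (pre 0))). exists (sq (Nat.div2 0), Nat.odd 0).
  apply h. right; exists 0; reflexivity.
- exact Bx_good.
Qed.
End Seq.

Lemma compl_finite : exists l, forall x, ~ Dm x -> In x l.
Proof.
apply NNPP; intro H.
assert (H' : forall l, exists x, ~ Dm x /\ ~ In x l).
{ intro l. apply NNPP; intro h. apply H. exists l. intros x hx.
  apply NNPP; intro hn. apply h. exists x; auto. }
destruct (choice _ H') as [pick Hp].
exact (seq_contra pick Hp).
Qed.


Definition eps {T : Type} (d : T) (P : T -> Prop) : T :=
  match dec (exists x, P x) with
  | left h => proj1_sig (constructive_indefinite_description _ h)
  | right _ => d end.
Lemma eps_spec {T : Type} (d : T) (P : T -> Prop) : (exists x, P x) -> P (eps d P).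
Proof.
intro h. unfold eps. destruct (dec (exists x, P x)) as [h'|h'].
- exact (proj2_sig (constructive_indefinite_description _ h')).
- contradiction.
Qed.

Section Inj.
Variable d0 : Q.
Hypothesis Hd0 : Dm d0.
Variable l : list Q.
Hypothesis Hl : forall x, ~ Dm x -> In x l.

Definition lr (b : bool) (y : Q) : Q := eps d0 (fun x => A (x, (y, b))).
Lemma lr_spec b y : Dm y -> A (lr b y, (y, b)).
Proof.
intros [p hp]. unfold lr. apply eps_spec. destruct GA as [_ [_ [_ g4]]]. eauto.
Qed.
Lemma lr_D b y : Dm y -> Dm (lr b y).
Proof. intro h. exists (y,b). apply lr_spec; auto. Qed.
Lemma lr_inj b b' y y' : Dm y -> Dm y' -> lr b y = lr b' y' -> y = y' /\ b = b'.
Proof.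
intros h h' E. destruct GA as [g1 _].
pose proof (lr_spec b y h) as s1. pose proof (lr_spec b' y' h') as s2.
rewrite E in s1. pose proof (g1 _ _ _ s1 s2) as E2. injection E2; auto.
Qed.

Definition w (n : nat) : Q := Nat.iter n (lr false) (lr true d0).
Lemma w_D n : Dm (w n).
Proof. induction n; simpl; apply lr_D; auto. Qed.
Lemma w_inj : forall n m, w n = w m -> n = m.
Proof.
induction n; intros [|m] E; simpl in E; auto.
- apply lr_inj in E; [|auto| apply w_D]. destruct E; discriminate.
- apply lr_inj in E; [|apply w_D|auto]. destruct E; discriminate.
- apply lr_inj in E; [|apply w_D|apply w_D]. destruct E as [E _]. f_equal; auto.
Qed.

Fixpoint idx (x : Q) (l : list Q) : nat :=
  match l with nil => 0 | y :: l' => if dec (y = x) then 0 else S (idx x l') end.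
Lemma idx_inj : forall l x y, In x l -> In y l -> idx x l = idx y l -> x = y.
Proof.
induction l0 as [|a l0 IH]; intros x y hx hy E; [destruct hx|].
simpl in E. destruct (dec (a = x)) as [ax|ax]; destruct (dec (a = y)) as [ay|ay];
  try discriminate.
- congruence.
- destruct hx as [hx|hx]; [contradiction|]. destruct hy as [hy|hy]; [contradiction|].
  injection E; intro; eauto.
Qed.

Definition jj (x : Q) : Q := if dec (Dm x) then lr false x else lr true (w (idx x l)).
Lemma jj_D x : Dm (jj x).
Proof. unfold jj; destruct (dec (Dm x)); apply lr_D; auto. apply w_D. Qed.
Lemma jj_inj x y : jj x = jj y -> x = y.
Proof.
unfold jj; destruct (dec (Dm x)) as [hx|hx]; destruct (dec (Dm y)) as [hy|hy]; intro E.
- apply lr_inj in E; tauto.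
- apply lr_inj in E; [|auto|apply w_D]. destruct E; discriminate.
- apply lr_inj in E; [|apply w_D|auto]. destruct E; discriminate.
- apply lr_inj in E; [|apply w_D|apply w_D]. destruct E as [E _].
  apply w_inj in E. apply (idx_inj l); auto.
Qed.

Definition ee (z : Q + Q) : Q :=
  match z with inl x => lr false (jj x) | inr x => lr true (jj x) end.
Lemma ee_inj z z' : ee z = ee z' -> z = z'.
Proof.
destruct z as [x|x]; destruct z' as [y|y]; simpl; intro E;
  apply lr_inj in E; try apply jj_D; destruct E as [E1 E2]; try discriminate;
  f_equal; apply jj_inj; auto.
Qed.
End Inj.
End QQ.

Section SB.
Variable Q : Type.
Variable e : Q + Q -> Q.
Hypothesis e_inj : forall z z', e z = e z' -> z = z'.
Inductive Cc : Q + Q -> Prop :=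
| Cc0 q : Cc (inr q)
| Cc1 z : Cc z -> Cc (inl (e z)).
Definition hh (z : Q + Q) : Q :=
  if dec (Cc z) then e z else match z with inl q => q | inr q => q end.
Lemma hh_inj z z' : hh z = hh z' -> z = z'.
Proof.
unfold hh. destruct (dec (Cc z)) as [c|c]; destruct (dec (Cc z')) as [c'|c']; intro E.
- auto.
- destruct z' as [q|q]; [|exfalso; apply c'; constructor].
  subst q. exfalso. apply c'. constructor. auto.
- destruct z as [q|q]; [|exfalso; apply c; constructor].
  subst q. exfalso. apply c. constructor. auto.
- destruct z as [q|q]; [|exfalso; apply c; constructor].
  destruct z' as [q'|q']; [|exfalso; apply c'; constructor]. congruence.
Qed.
Lemma hh_surj q : exists z, hh z = q.
Proof.
destruct (dec (Cc (inl q))) as [c|c].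
- inversion c as [|z cz E]. exists z. unfold hh. destruct (dec (Cc z)); [auto|contradiction].
- exists (inl q). unfold hh. destruct (dec (Cc (inl q))); [contradiction|auto].
Qed.
End SB.


Lemma QQ_bij (Q : Type) : infinite_type Q ->
  exists h : Q + Q -> Q, (forall z z', h z = h z' -> z = z') /\ (forall q, exists z, h z = q).
Proof.
intro Hinf.
destruct (good_zorn Q) as [A [GA maxA]].
destruct (compl_finite Q A GA maxA) as [l Hl].
assert (Hd : exists d0, Dm Q A d0).
{ destruct (Hinf l) as [x hx]. exists x. apply NNPP; intro h. apply hx, Hl, h. }
destruct Hd as [d0 Hd0].
exists (hh Q (ee Q A d0 l)). split.
- apply hh_inj. apply ee_inj; auto.
- apply hh_surj.
Qed.

Lemma sig_eq {T : Type} {P : T -> Prop} (s t : sig P) : proj1_sig s = proj1_sig t -> s = t.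
Proof. destruct s as [x p], t as [y q]; simpl; intros ->. f_equal. apply proof_irrelevance. Qed.

Definition Coim {X Q : Type} (f : X -> X) (k : Q -> X) : Prop :=
  injective_fun k /\ (forall q y, f y <> k q) /\
  (forall x, (forall y, f y <> x) -> exists q, k q = x).

Lemma Coim_equip {X Q : Type} (f : X -> X) (k : Q -> X) : Coim f k -> equipotent (coimage f) Q.
Proof.
intros [ki [kn kc]].
assert (cov : forall s : coimage f, exists q, k q = proj1_sig s).
{ intros [x p]. apply kc. intros y E. apply p. exists y; exact E. }
exists (fun s => proj1_sig (constructive_indefinite_description _ (cov s))).
assert (pr : forall q, ~ exists y, f y = k q).
{ intros q [y E]. exact (kn q y E). }
exists (fun q => exist _ (k q) (pr q)). split.
- intro s. apply sig_eq. simpl.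
  exact (proj2_sig (constructive_indefinite_description _ (cov s))).
- intro q. apply ki.
  exact (proj2_sig (constructive_indefinite_description _ (cov (exist _ (k q) (pr q))))).
Qed.

Lemma equip_Coim {X Q : Type} (f : X -> X) : equipotent (coimage f) Q -> exists k : Q -> X, Coim f k.
Proof.
intros [g [h [gh hg]]].
exists (fun q => proj1_sig (h q)). split; [|split].
- intros q q' E. apply sig_eq in E. rewrite <- (hg q), <- (hg q'), E. reflexivity.
- intros q y E. apply (proj2_sig (h q)). exists y; exact E.
- intros x hx. assert (p : ~ exists y, f y = x) by (intros [y E]; exact (hx y E)).
  exists (g (exist _ x p)). rewrite gh. reflexivity.
Qed.

Section Main.
Variables X Q : Type.
Variable h : Q + Q -> Q.
Hypothesis h_inj : forall z z', h z = h z' -> z = z'.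
Variable hi : Q -> Q + Q.
Hypothesis h_hi : forall q, h (hi q) = q.
Lemma hi_h z : hi (h z) = z.
Proof. apply h_inj. rewrite h_hi. reflexivity. Qed.

Lemma inBL_mul a c : inBL X Q a -> inBL X Q c -> inBL X Q (bl_mul a c).
Proof.
intros [ai ae] [ci ce]. apply equip_Coim in ae as [ka [kai [kan kac]]].
apply equip_Coim in ce as [kc [kci [kcn kcc]]].
unfold bl_mul. split.
{ intros x y E. apply ai, ci, E. }
apply (Coim_equip _ (fun q => match hi q with inl u => kc u | inr u => c (ka u) end)).
split; [|split].
- intros q q' E.
  rewrite <- (h_hi q), <- (h_hi q'). f_equal.
  destruct (hi q) as [u|u]; destruct (hi q') as [u'|u'].
  + f_equal. apply kci, E.
  + exfalso. exact (kcn u _ (eq_sym E)).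
  + exfalso. exact (kcn u' _ E).
  + f_equal. apply kai, ci, E.
- intros q y. destruct (hi q) as [u|u].
  + apply kcn.
  + intro E. apply ci in E. exact (kan u y E).
- intros x hx. destruct (classic (exists y, c y = x)) as [[y0 E0]|nx].
  + assert (hy : forall y, a y <> y0) by (intros y E; apply (hx y); congruence).
    destruct (kac y0 hy) as [u hu]. exists (h (inr u)). rewrite hi_h. congruence.
  + assert (hy : forall y, c y <> x) by (intros y E; apply nx; exists y; exact E).
    destruct (kcc x hy) as [u hu]. exists (h (inl u)). rewrite hi_h. exact hu.
Qed.

Variable i : Q -> X.
Hypothesis i_inj : injective_fun i.

Definition ext (g : Q -> Q) (x : X) : X :=
  match dec (exists q, i q = x) with
  | left H => i (g (proj1_sig (constructive_indefinite_description _ H)))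
  | right _ => x end.
Lemma ext_i g q : ext g (i q) = i (g q).
Proof.
unfold ext. destruct (dec (exists q', i q' = i q)) as [H|H].
- pose proof (proj2_sig (constructive_indefinite_description _ H)) as E.
  apply i_inj in E. simpl in E. rewrite E. reflexivity.
- exfalso. apply H. exists q; reflexivity.
Qed.
Lemma ext_out g x : (~ exists q, i q = x) -> ext g x = x.
Proof. intro H. unfold ext. destruct (dec (exists q, i q = x)); [contradiction|reflexivity]. Qed.

Lemma ext_inBL g (k : Q -> Q) : injective_fun g -> Coim g k -> inBL X Q (ext g).
Proof.
intros gi [ki [kn kc]]. split.
- intros x y E. destruct (classic (exists q, i q = x)) as [[q <-]|nx];
  destruct (classic (exists q, i q = y)) as [[q' <-]|ny].
  + rewrite !ext_i in E. apply i_inj, gi in E. congruence.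
  + rewrite ext_i, ext_out in E by auto. exfalso; apply ny; eexists; eauto.
  + rewrite ext_i, ext_out in E by auto. exfalso; apply nx; eexists; eauto.
  + rewrite !ext_out in E by auto. exact E.
- apply (Coim_equip _ (fun q => i (k q))). split; [|split].
  + intros q q' E. apply ki, i_inj, E.
  + intros q y E. destruct (classic (exists q', i q' = y)) as [[q' <-]|ny].
    * rewrite ext_i in E. apply i_inj in E. exact (kn q q' E).
    * rewrite ext_out in E by auto. apply ny. exists (k q). auto.
  + intros x hx. destruct (classic (exists q, i q = x)) as [[q <-]|nx].
    * assert (hq : forall y, g y <> q) by (intros y E; apply (hx (i y)); rewrite ext_i; congruence).
      destruct (kc q hq) as [q' hq']. exists q'. congruence.
    * exfalso. apply (hx x). apply ext_out; auto.
Qed.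

Definition rho (x y : X -> X) : Prop :=
  inBL X Q x /\ inBL X Q y /\ forall z, x z = y z \/ ~ exists w, y w = x z.

Lemma rho_diag : diagonal_subsemigroup (inBL X Q) rho.
Proof.
split; [|split].
- intros a b [ha [hb _]]; auto.
- intros a ha. split; [auto|split; [auto|]]. intro z; left; reflexivity.
- intros a b c d [ha [hb rab]] [hc [hd rcd]].
  split; [apply inBL_mul; auto|split; [apply inBL_mul; auto|]].
  destruct hd as [di _]. unfold bl_mul. intro z.
  destruct (rab z) as [E|N].
  + rewrite E. destruct (rcd (b z)) as [E'|N'].
    * left; exact E'.
    * right. intros [w Ew]. apply N'. exists (b w). exact Ew.
  + right. intros [w Ew]. destruct (rcd (a z)) as [E'|N'].
    * rewrite E' in Ew. apply di in Ew. apply N. exists w; exact Ew.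
    * apply N'. exists (b w). exact Ew.
Qed.

Definition Lm (u : Q) : Q := h (inl u).
Definition Rm (u : Q) : Q := h (inr u).
Definition sg (q : Q) : Q := match hi q with inl u => Rm u | inr u => Lm u end.

Lemma LR_ne u v : Lm u <> Rm v.
Proof. intro E. apply h_inj in E. discriminate. Qed.
Lemma Lm_inj : injective_fun Lm.
Proof. intros u v E. apply h_inj in E. congruence. Qed.
Lemma Rm_inj : injective_fun Rm.
Proof. intros u v E. apply h_inj in E. congruence. Qed.
Lemma sg_sg q : sg (sg q) = q.
Proof.
unfold sg. destruct (hi q) as [u|u] eqn:Hq; unfold Rm, Lm; rewrite hi_h;
  rewrite <- (h_hi q), Hq; reflexivity.
Qed.
Lemma sg_nofix q : sg q <> q.
Proof.
unfold sg. destruct (hi q) as [u|u] eqn:Hq; intro E; rewrite <- (h_hi q), Hq in E;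
  apply h_inj in E; discriminate.
Qed.
Lemma sg_inj : injective_fun sg.
Proof. intros u v E. rewrite <- (sg_sg u), <- (sg_sg v), E. reflexivity. Qed.

Lemma Coim_L : Coim Lm Rm.
Proof.
split; [apply Rm_inj|split].
- intros q y. apply LR_ne.
- intros x hx. rewrite <- (h_hi x) in *. destruct (hi x) as [u|u].
  + exfalso. exact (hx u eq_refl).
  + exists u; reflexivity.
Qed.
Lemma Coim_R : Coim Rm Lm.
Proof.
split; [apply Lm_inj|split].
- intros q y E. exact (LR_ne q y (eq_sym E)).
- intros x hx. rewrite <- (h_hi x) in *. destruct (hi x) as [u|u].
  + exists u; reflexivity.
  + exfalso. exact (hx u eq_refl).
Qed.
Lemma Coim_Ls : Coim (fun q => Lm (sg q)) Rm.
Proof.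
split; [apply Rm_inj|split].
- intros q y. apply LR_ne.
- intros x hx. rewrite <- (h_hi x) in *. destruct (hi x) as [u|u].
  + exfalso. apply (hx (sg u)). rewrite sg_sg. reflexivity.
  + exists u; reflexivity.
Qed.

Lemma not_congr (q0 : Q) : ~ is_congruence (inBL X Q) rho.
Proof.
intros [_ [_ tr]].
set (a := ext Lm). set (b := ext Rm). set (c := ext (fun q => Lm (sg q))).
assert (ha : inBL X Q a) by (apply (ext_inBL _ _ Lm_inj Coim_L)).
assert (hb : inBL X Q b) by (apply (ext_inBL _ _ Rm_inj Coim_R)).
assert (hc : inBL X Q c).
{ apply (ext_inBL _ _ (fun u v E => sg_inj _ _ (Lm_inj _ _ E)) Coim_Ls). }
assert (rab : rho a b).
{ split; [auto|split; [auto|]]. intro z.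
  destruct (classic (exists q, i q = z)) as [[q <-]|nz].
  - right. intros [w Ew]. unfold a, b in *. rewrite ext_i in Ew.
    destruct (classic (exists q', i q' = w)) as [[q' <-]|nw].
    + rewrite ext_i in Ew. apply i_inj in Ew. exact (LR_ne _ _ (eq_sym Ew)).
    + rewrite ext_out in Ew by auto. apply nw. eexists; eauto.
  - left. unfold a, b. rewrite !ext_out by auto. reflexivity. }
assert (rbc : rho b c).
{ split; [auto|split; [auto|]]. intro z.
  destruct (classic (exists q, i q = z)) as [[q <-]|nz].
  - right. intros [w Ew]. unfold b, c in *. rewrite ext_i in Ew.
    destruct (classic (exists q', i q' = w)) as [[q' <-]|nw].
    + rewrite ext_i in Ew. apply i_inj in Ew. exact (LR_ne _ _ Ew).
    + rewrite ext_out in Ew by auto. apply nw. eexists; eauto.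
  - left. unfold b, c. rewrite !ext_out by auto. reflexivity. }
destruct (tr a b c rab rbc) as [_ [_ rac]].
destruct (rac (i q0)) as [E|N]; unfold a, c in *.
- rewrite !ext_i in E. apply i_inj, Lm_inj in E. exact (sg_nofix q0 (eq_sym E)).
- apply N. exists (i (sg q0)). rewrite !ext_i, sg_sg. reflexivity.
Qed.
End Main.

Theorem mainTheorem12 (X Q : Type) :
  infinite_type Q ->
  (exists i : Q -> X, injective_fun i) ->
  ~ DSC (inBL X Q).
Proof.
intros Hinf [i Hi] HD.
destruct (QQ_bij Q Hinf) as [h [hinj hsurj]].
destruct (choice _ hsurj) as [hi hhi].
destruct (Hinf nil) as [q0 _].
apply (not_congr X Q h hinj hi hhi i Hi q0).
apply HD. apply (rho_diag X Q h hinj hi hhi).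
Qed.
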